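(* Let $m\ge1$ be an integer and write $s_n=s_n^{(m+1,m+2)}$. Then for all $n\ge0$, \[ s_n^2=\delta_{n,0}+s_{n-m-1}^2+s_{n-m-2}^2+2\sum_{l=2m+3}^n P_{l-2m-3}^{\{-2,m-1,m\}}s_{n-l}^2 . \]
   Context: For positive integers $p<q$, $s_n^{(p,q)}$ is defined by $s_n^{(p,q)}=\delta_{0,n}+s_{n-p}^{(p,q)}+s_{n-q}^{(p,q)}$ for $n\ge0$ and $s_n^{(p,q)}=0$ for $n<0$. $\delta_{i,j}$ is $1$ if $i=j$ and $0$ otherwise. For a finite set $W$ of integers, $P_n^W$ is the number of permutations $\pi$ of $\{1,\dots,n\}$ with $\pi(i)-i\in W$ for all $i$ (the permanent of the $n\times n$ $(0,1)$ Toeplitz matrix whose $(i,j)$ entry is $1$ iff $j-i\in W$), with $P_0^W=1$. Empty sums are $0$. *)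

(* Defs.v *)
From mathcomp Require Import all_boot all_order all_algebra all_fingroup.
Set Implicit Arguments. Unset Strict Implicit. Unset Printing Implicit Defensive.
Import GRing.Theory Num.Theory.

Fixpoint s_fuel (p q k n : nat) : nat :=
  match k with
  | 0 => 0
  | k'.+1 => (n == 0%N) + (if (p <= n)%N then s_fuel p q k' (n - p) else 0)
                        + (if (q <= n)%N then s_fuel p q k' (n - q) else 0)
  end.

(* s^{(p,q)}_n for an integer index n; 0 for n < 0.
   Fuel n.+1 suffices whenever p >= 1. *)
Definition sseq (p q : nat) (n : int) : nat :=
  match n with
  | Posz k => s_fuel p q k.+1 k
  | Negz _ => 0
  end.

Definition Pperm (W : seq int) (n : nat) : nat :=
  #|[set s : 'S_n | [forall i : 'I_n, (Posz (s i) - Posz (i : nat))%R \in W]]|.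

(* Main.v *)
Require Import Defs.
From mathcomp Require Import all_boot all_order all_algebra all_fingroup.
From mathcomp Require Import zify.
Set Implicit Arguments. Unset Strict Implicit. Unset Printing Implicit Defensive.
Import GRing.Theory Num.Theory.



Lemma s_fuelSE p q k n : s_fuel p q k.+1 n = (n == 0) + (if p <= n then s_fuel p q k (n - p) else 0)
   + (if q <= n then s_fuel p q k (n - q) else 0).
Proof. by []. Qed.

Lemma s_fuel_S p q f n : 0 < p -> 0 < q -> n < f -> s_fuel p q f.+1 n = s_fuel p q f n.
Proof.
move=> p0 q0; elim: f n => [|f IH] n // nf.
rewrite [LHS]s_fuelSE [RHS]s_fuelSE.
case: (leqP p n) => pn; case: (leqP q n) => qn //; rewrite ?IH //; lia.
Qed.

Lemma s_fuel_big p q f n : 0 < p -> 0 < q -> n < f -> s_fuel p q f n = s_fuel p q n.+1 n.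
Proof.
move=> p0 q0 nf; rewrite -(subnK nf); elim: (f - n.+1) => [|k IH] //.
by rewrite addSn s_fuel_S // ?IH //; lia.
Qed.

Definition s m n := s_fuel m.+1 m.+2 n.+1 n.

Lemma s_rec m n : s m n = (n == 0) + (if m.+1 <= n then s m (n - m.+1) else 0)
   + (if m.+2 <= n then s m (n - m.+2) else 0).
Proof.
rewrite /s s_fuelSE; case: (leqP m.+1 n) => h1; case: (leqP m.+2 n) => h2 //;
rewrite ?(@s_fuel_big _ _ n (n - m.+1)) ?(@s_fuel_big _ _ n (n - m.+2)) //; lia.
Qed.

Definition sh m N d := if d <= N then s m (N - d) else 0.

Lemma sh0 m N : sh m N 0 = s m N.
Proof. by rewrite /sh subn0. Qed.
Lemma shSS m N d : sh m N.+1 d.+1 = sh m N d.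
Proof. by rewrite /sh ltnS subSS. Qed.
Lemma sh_0N m d : 0 < d -> sh m 0 d = 0.
Proof. by rewrite /sh; case: d. Qed.
Lemma sh_add m N d u : sh m (d + N) (d + u) = sh m N u.
Proof. by elim: d => // d IH; rewrite !addSn shSS. Qed.

Lemma s_recS m N : s m N.+1 = sh m N m + sh m N m.+1.
Proof. by rewrite s_rec /sh !ltnS !subSS. Qed.

Fixpoint H (m j u v : nat) {struct j} : nat :=
  match j with
  | 0 => ((u == 0) && (v == 1)) || ((u == 1) && (v == 0))
  | j'.+1 => if u == 0 then (if v != m.+1 then H m j' m v.-1 else 0)
                           + (if v != m.+2 then H m j' m.+1 v.-1 else 0)
             else if v == 0 then (if u != m.+1 then H m j' u.-1 m else 0)
                           + (if u != m.+2 then H m j' u.-1 m.+1 else 0)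
             else H m j' u.-1 v.-1
  end.

Lemma H_sym m j u v : H m j u v = H m j v u.
Proof.
elim: j u v => [|j IH] u v /=.
  by case: u => [|[|u]]; case: v => [|[|v]].
case: u => [|u]; case: v => [|v] //=; by rewrite ?(IH m) ?(IH m.+1) ?(IH u).
Qed.

Lemma F_id m N : 0 < m -> forall u v, u != v -> u <= m.+1 -> v <= m.+1 ->
  sh m N u * sh m N v = \sum_(j < N.+1) H m j u v * (sh m N (j + m.+2))^2
     + (((u==0)&&(v==m.+1)) || ((u==m.+1)&&(v==0))) * (sh m N m.+1)^2.
Proof.
move=> m0; elim: N => [|N IH] u v uv um vm.
  rewrite big_ord1 /= (@sh_0N m m.+2) // (@sh_0N m m.+1) // exp0n // !muln0 addn0.
  move: uv um vm; case: u => [|u]; case: v => [|v] //= _ _ _; rewrite ?sh_0N ?muln0 ?mul0n //.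
have caseb : forall v, 0 < v -> v <= m.+1 ->
  sh m N.+1 0 * sh m N.+1 v = \sum_(j < N.+2) H m j 0 v * (sh m N.+1 (j + m.+2))^2
     + ((v==m.+1)) * (sh m N.+1 m.+1)^2.
  clear uv um vm u v; move=> [//|v] _ vm.
  rewrite sh0 s_recS shSS mulnDl big_ord_recl /= orbF add0n (shSS m N m.+1) [sh m N.+1 m.+1]shSS.
  have vn2 : (v.+1 != m.+2) = true by apply/negP => /eqP; lia.
  under eq_bigr => i _ do rewrite add0n /bump add1n addSn shSS vn2 mulnDl.
  rewrite big_split /=.
  case: (ltngtP v m) => [vlt|vgt|->]; [|lia|].
  - have vn1 : (v.+1 != m.+1) = true by apply/negP => /eqP; lia.
    have vn1' : (v.+1 == m.+1) = false by apply/negbTE; lia.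
    rewrite vn1 vn1' mul0n addn0 (IH m v) ?(IH m.+1 v) //; try lia.
    have -> : (m == 0) && (v == m.+1) || (m == m.+1) && (v == 0) = false by apply/negbTE; lia.
    rewrite (_ : (m.+1 == 0) && (v == m.+1) || (m.+1 == m.+1) && (v == 0) = (v == 0)); last by rewrite eqxx /=; lia.
    rewrite mul0n !addn0 eqSS; by case: (v == 0); rewrite ?mul1n ?mul0n ?add0n ?addn0 // addnA addnC.
  - rewrite eqxx eqSS (negbTE (lt0n_neq0 m0)) mul0n add0n mul1n.
    under eq_bigr => i _ do rewrite mul0n.
    rewrite big1 // add0n (IH m.+1 m) //; try lia.
    have -> : (m.+1 == 0) && (m == m.+1) || (m.+1 == m.+1) && (m == 0) = false by apply/negbTE; lia.
    by rewrite mul0n addn0 mulnn addnC.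
move: uv um vm; case: u => [|u]; case: v => [|v] // uv um vm.
- by rewrite caseb //= orbF.
- rewrite mulnC caseb //=; under eq_bigr => j _ do rewrite H_sym.
  by rewrite andbT.
- rewrite !shSS (IH u v) //; try lia.
  have -> : (u == 0) && (v == m.+1) || (u == m.+1) && (v == 0) = false by apply/negbTE; lia.
  rewrite [in RHS]big_ord_recl /= !andbF !mul0n ?add0n ?addn0.
  by apply: eq_bigr => j _; rewrite /bump /=.
Qed.



Definition Wl (m : nat) : seq int := [:: (-2)%R; (Posz m - 1)%R; Posz m].

Fixpoint allseqs (W : seq int) k : seq (seq int) :=
  if k is k'.+1 then [seq w :: q | w <- W, q <- allseqs W k'] else [:: [::]].

Lemma count_allpairs_cons (L : seq int) (A : seq (seq int)) P :
  count P [seq w :: q | w <- L, q <- A] = \sum_(w <- L) count (fun q => P (w :: q)) A.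
Proof.
elim: L => [|w L IH]; first by rewrite big_nil.
by rewrite allpairs_cons count_cat count_map IH big_cons.
Qed.

Lemma count_allseqsS W k P : count P (allseqs W k.+1) =
  \sum_(w <- W) count (fun q => P (w :: q)) (allseqs W k).
Proof. exact: count_allpairs_cons. Qed.

Lemma mem_allseqs W k x : (x \in allseqs W k) = (size x == k) && all (mem W) x.
Proof.
elim: k x => [|k IH] [|w x] //=.
- by apply/negbTE/allpairsP => -[[a b] /= [_ _ ]].
- apply/allpairsP/idP.
    by case=> -[a b] /= [aW bA [-> ->]]; rewrite eqSS aW -(IH b) bA.
  by move=> /and3P[sx wW ax]; exists (w, x); rewrite /= wW IH -eqSS sx ax.
Qed.

Lemma uniq_allseqs W k : uniq W -> uniq (allseqs W k).
Proof.
move=> uW; elim: k => [|k IH] //=.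
apply: allpairs_uniq => // -[a b] [c d] _ _ /= [-> ->] //.
Qed.

Fixpoint tg (j : nat) (ws : seq int) : seq int :=
  if ws is w :: ws' then (Posz j + w)%R :: tg j.+1 ws' else [::].
Definition E ws := (-2)%R :: (-1)%R :: tg 0 ws.
Definition Rng i : seq int := [seq (Posz j - 2)%R | j <- iota 0 i].
Definition valid n ws := perm_eq (E ws) (Rng n.+2).
Definition Good p u v := perm_eq (E p)
  (Rng (size p) ++ [:: Posz (size p) - 2 + Posz u; Posz (size p) - 2 + Posz v]%R).

Lemma tg_cat j p q : tg j (p ++ q) = tg j p ++ tg (j + size p) q.
Proof. by elim: p j => [|w p IH] j /=; rewrite ?addn0 // IH addnS. Qed.

Lemma E_cat p q : E (p ++ q) = E p ++ tg (size p) q.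
Proof. by rewrite /E tg_cat. Qed.

Lemma E_rcons p w : E (rcons p w) = rcons (E p) (Posz (size p) + w)%R.
Proof. by rewrite -cats1 E_cat /= cats1. Qed.

Lemma tg_ge j q : all (fun w => (-2 <= w)%R) q -> forall t, t \in tg j q -> (Posz j - 2 <= t)%R.
Proof.
elim: q j => [|w q IH] j //= /andP[hw hq] t; rewrite inE => /orP[/eqP ->|ht].
  lia.
have := IH j.+1 hq t ht; lia.
Qed.

Lemma Rng_S i : Rng i.+1 = rcons (Rng i) (Posz i - 2)%R.
Proof. by rewrite /Rng -[i.+1]addn1 iotaD map_cat /= cats1. Qed.

Lemma mem_Rng i t : (t \in Rng i) = ((-2 <= t) && (t < Posz i - 2))%R.
Proof.
apply/mapP/idP.
  by case=> j; rewrite mem_iota => hj ->; lia.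
move=> h; exists (absz (t + 2)%R); rewrite ?mem_iota; lia.
Qed.

Lemma uniq_Rng i : uniq (Rng i).
Proof.
rewrite map_inj_uniq ?iota_uniq // => a b /= h; lia.
Qed.

Lemma Rng_SS n : Rng n.+2 = Rng n ++ [:: Posz n - 2; Posz n.+1 - 2]%R.
Proof. by rewrite Rng_S Rng_S -!cats1 -catA. Qed.

Lemma swap2 (T : eqType) (x y : T) : perm_eq [:: x; y] [:: y; x].
Proof. by apply/seq.permP => a /=; rewrite addnCA. Qed.

Lemma perm2 (T : eqType) (x y c d : T) :
  perm_eq [:: x; y] [:: c; d] = ((x == c) && (y == d)) || ((x == d) && (y == c)).
Proof.
apply/idP/idP.
- move=> P; have: x \in [:: c; d] by rewrite -(perm_mem P) mem_head.
  rewrite !inE => /orP[/eqP Ex|/eqP Ex]; subst x.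
  + move: P; rewrite perm_cons => /perm_mem/(_ y); rewrite !inE eqxx => /esym ->.
    by rewrite eqxx.
  + have P2 : perm_eq [:: d; y] [:: d; c] by apply: perm_trans P (swap2 _ _).
    move: P2; rewrite perm_cons => /perm_mem/(_ y); rewrite !inE eqxx => /esym ->.
    by rewrite eqxx orbT.
- by case/orP => /andP[/eqP -> /eqP ->] //; apply: swap2.
Qed.

Lemma Z_dup n p (A : seq (seq int)) : ~~ uniq (E p) -> count (fun q => valid n (p ++ q)) A = 0.
Proof.
move=> nu; apply/eqP; rewrite -leqn0 leqNgt -has_count; apply/hasP => -[q _].
rewrite /valid E_cat => /perm_uniq; rewrite uniq_Rng cat_uniq => /and3P[uE _ _].
by rewrite uE in nu.
Qed.

Lemma Z_gap n p (A : seq (seq int)) x : x \notin E p -> x \in Rng n.+2 ->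
  (x < Posz (size p) - 2)%R -> {in A, forall q, all (fun w => (-2 <= w)%R) q} ->
  count (fun q => valid n (p ++ q)) A = 0.
Proof.
move=> nx xR xl hA; apply/eqP; rewrite -leqn0 leqNgt -has_count; apply/hasP => -[q qA].
rewrite /valid E_cat => /perm_mem/(_ x); rewrite xR mem_cat (negbTE nx) /= => /tg_ge.
move=> /(_ (hA q qA)); lia.
Qed.

Lemma Good_rcons p w X : perm_eq (E p) X -> perm_eq (E (rcons p w)) (rcons X (Posz (size p) + w)%R).
Proof. by move=> h; rewrite E_rcons -!cats1 perm_cat2r. Qed.


Lemma allseqs_ge m k : {in allseqs (Wl m) k, forall q, all (fun w => (-2 <= w)%R) q}.
Proof.
move=> q; rewrite mem_allseqs => /andP[_ /allP h]; apply/allP => w /h.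
rewrite !inE => /or3P[] /eqP ->; lia.
Qed.

Lemma perm3swap (a b c a' b' c' : int) : a = a' -> b = c' -> c = b' ->
  perm_eq [:: a; b; c] [:: a'; b'; c'].
Proof. by move=> -> -> ->; rewrite perm_cons; exact: swap2. Qed.

Lemma perm3rot (a b c a' b' c' : int) : a = b' -> b = c' -> c = a' ->
  perm_eq [:: a; b; c] [:: a'; b'; c'].
Proof. by move=> -> -> ->; apply/seq.permP => f /=; lia. Qed.

Lemma transfer m n : 0 < m -> forall k p u v, size p + k = n -> u != v -> Good p u v ->
  count (fun q => valid n (p ++ q)) (allseqs (Wl m) k) = H m k u v.
Proof.
move=> m0; elim=> [|k IH] p u v hs uv G.
  rewrite /= cats0 addn0; rewrite addn0 in hs; subst n.
  rewrite /valid (permPl G) Rng_SS perm_cat2l perm2.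
  congr (nat_of_bool _).
  set c := size p.
  have e1 : (Posz c - 2 + Posz u == Posz c - 2)%R = (u == 0) by apply/idP/idP => /eqP h; apply/eqP; lia.
  have e2 : (Posz c - 2 + Posz v == Posz c.+1 - 2)%R = (v == 1) by apply/idP/idP => /eqP h; apply/eqP; lia.
  have e3 : (Posz c - 2 + Posz u == Posz c.+1 - 2)%R = (u == 1) by apply/idP/idP => /eqP h; apply/eqP; lia.
  have e4 : (Posz c - 2 + Posz v == Posz c - 2)%R = (v == 0) by apply/idP/idP => /eqP h; apply/eqP; lia.
  by rewrite e1 e2 e3 e4.
have T : forall p w, count (fun q => valid n (p ++ w :: q)) (allseqs (Wl m) k)
    = count (fun q => valid n (rcons p w ++ q)) (allseqs (Wl m) k).
  by move=> p' w; apply: eq_count => q; rewrite cat_rcons.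
have case0 : forall p v, size p + k.+1 = n -> 0 != v -> Good p 0 v ->
    count (fun q => valid n (p ++ q)) (allseqs (Wl m) k.+1) = H m k.+1 0 v.
  clear p u v hs uv G => p v hs v0 G.
  rewrite count_allseqsS /Wl !big_cons big_nil addn0 !T /=.
  set i := size p in G hs *.
  have G1 := Good_rcons (-2)%R G.
  rewrite (@Z_dup n (rcons p (-2)%R)); last first.
    rewrite (perm_uniq G1) rcons_uniq negb_and negbK mem_cat !inE; apply/orP; left.
    apply/orP; right; apply/orP; left; apply/eqP; lia.
  rewrite add0n; congr (_ + _).
    case: (eqVneq v m.+1) => [vm1|vm1] /=.
      rewrite (@Z_dup n) //.
      have G2 := Good_rcons (Posz m - 1)%R G.
      rewrite (perm_uniq G2) rcons_uniq negb_and negbK mem_cat !inE; apply/orP; left.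
      apply/orP; right; apply/orP; right; apply/eqP; rewrite vm1; lia.
    rewrite (IH _ m v.-1) //; first (by rewrite size_rcons; lia); first lia.
    rewrite /Good size_rcons; apply: perm_trans (Good_rcons _ G) _.
    rewrite Rng_S -!cats1 -!catA perm_cat2l /=; apply: perm3swap; lia.
  case: (eqVneq v m.+2) => [vm1|vm1] /=.
    rewrite (@Z_dup n) //.
    have G2 := Good_rcons (Posz m)%R G.
    rewrite (perm_uniq G2) rcons_uniq negb_and negbK mem_cat !inE; apply/orP; left.
    apply/orP; right; apply/orP; right; apply/eqP; rewrite vm1; lia.
  rewrite (IH _ m.+1 v.-1) //; first (by rewrite size_rcons; lia); first lia.
  rewrite /Good size_rcons; apply: perm_trans (Good_rcons _ G) _.
  rewrite Rng_S -!cats1 -!catA perm_cat2l /=; apply: perm3swap; lia.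
case: (eqVneq u 0) => [u0|u0]; first by subst u; apply: case0.
case: (eqVneq v 0) => [v0|v0].
  subst v; rewrite H_sym; apply: case0 => //; first by rewrite eq_sym.
  by apply: perm_trans G _; rewrite perm_cat2l swap2.
rewrite count_allseqsS /Wl !big_cons big_nil addn0 !T /= (negbTE u0) (negbTE v0).
set i := size p in G hs *.
rewrite (IH _ u.-1 v.-1); first last.
- rewrite /Good size_rcons; apply: perm_trans (Good_rcons _ G) _.
  rewrite Rng_S -!cats1 -!catA perm_cat2l /=; apply: perm3rot; lia.
- lia.
- rewrite size_rcons; lia.
have nE : forall w, (-1 <= w)%R -> (Posz i - 2)%R \notin E (rcons p w).
  move=> w hw; rewrite (perm_mem (Good_rcons _ G)) -cats1 !mem_cat !inE mem_Rng.
  lia.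
have xR : (Posz i - 2)%R \in Rng n.+2 by rewrite mem_Rng; lia.
rewrite (@Z_gap n _ _ (Posz i - 2)%R) ?nE ?size_rcons //; try lia; last exact: allseqs_ge.
rewrite (@Z_gap n _ _ (Posz i - 2)%R) ?nE ?size_rcons //; try lia; last exact: allseqs_ge.
Qed.

Lemma size_tg j x : size (tg j x) = size x.
Proof. by elim: x j => //= w x IH j; rewrite IH. Qed.

Lemma nth_tg j x k : k < size x -> nth 0%R (tg j x) k = (Posz (j + k) + nth 0%R x k)%R.
Proof.
elim: x j k => [|w x IH] j [|k] //= hk; first by rewrite addn0.
by rewrite IH // addSnnS.
Qed.

Lemma tg_map n (G : 'I_n -> int) (L : seq 'I_n) j :
  map val L = iota j (size L) -> tg j (map (fun i => G i - Posz (val i))%R L) = map G L.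
Proof.
elim: L j => [|x L IH] j //= [hx hL]; rewrite IH // hx; congr (_ :: _); lia.
Qed.

Lemma Rng_shift n : Rng n.+2 = (-2)%R :: (-1)%R :: map Posz (iota 0 n).
Proof.
rewrite /Rng /=.
have -> : iota 2 n = map (addn 2) (iota 0 n) by rewrite -iotaDl.
rewrite -map_comp; congr (_ :: _ :: _); try lia.
by apply: eq_map => j /=; lia.
Qed.

Definition fS n (s : 'S_n) : seq int := [seq (Posz (s i) - Posz i)%R | i <- enum 'I_n].

Lemma perm_map_enum n (s : 'S_n) : perm_eq (map s (enum 'I_n)) (enum 'I_n).
Proof.
apply: uniq_perm; rewrite ?enum_uniq ?(map_inj_uniq (@perm_inj _ s)) ?enum_uniq // => i.
rewrite mem_enum; apply/mapP; exists (s^-1 i)%g; rewrite ?mem_enum // permKV //.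
Qed.

Lemma Pperm_count m n : Pperm [:: (-2)%R; ((Posz m) - 1)%R; (Posz m)] n
   = count (valid n) (allseqs (Wl m) n).
Proof.
rewrite /Pperm -size_filter cardE -(size_map (@fS n)).
apply: perm_size; apply: uniq_perm.
- rewrite map_inj_in_uniq ?enum_uniq // => s t _ _ h; apply/permP => i.
  have := congr1 (nth 0%R ^~ i) h; rewrite /fS !(nth_map i); try by rewrite -enumT size_enum_ord.
  have e := nth_ord_enum i i; rewrite enumT /= in e; rewrite e.
  by move=> /addIr /eqP; rewrite eqz_nat => /eqP /val_inj.
all: try by rewrite -?enumT -cardE card_ord.
- by apply: filter_uniq; apply: uniq_allseqs; rewrite /= !inE; lia.
move=> x; rewrite mem_filter mem_allseqs; apply/mapP/idP.
  case=> s; rewrite mem_enum inE => /forallP hs ->.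
  rewrite /fS size_map size_enum_ord eqxx /=; apply/andP; split; last first.
    by apply/allP => w /mapP [i _ ->]; exact: hs i.
  rewrite /valid /E tg_map; last by rewrite val_enum_ord size_enum_ord.
  rewrite Rng_shift !perm_cons -val_enum_ord -map_comp.
  have -> : [seq Posz (s i) | i <- enum 'I_n] = map (Posz \o val) (map s (enum 'I_n)).
    by elim: (enum 'I_n) => //= a l ->.
  by apply: perm_map; exact: perm_map_enum.
move=> /and3P[vx /eqP sx ax].
set t := tg 0 x.
have pt : perm_eq t (map Posz (iota 0 n)) by move: vx; rewrite /valid /E Rng_shift !perm_cons.
have ut : uniq t by rewrite (perm_uniq pt) map_inj_uniq ?iota_uniq // => a b [].
have st : size t = n by rewrite size_tg.
have rng : forall i : 'I_n, exists k, k < n /\ nth 0%R t i = Posz k.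
  move=> i; have : nth 0%R t i \in map Posz (iota 0 n) by rewrite -(perm_mem pt) mem_nth // st.
  by case/mapP => k; rewrite mem_iota => /andP[_ hk] ->; exists k.
pose g (i : 'I_n) := insubd i (absz (nth 0%R t i)).
have gv : forall i, Posz (g i) = nth 0%R t i.
  by move=> i; rewrite /g val_insubd; have [k [hk ->]] := rng i; rewrite /= hk.
have ginj : injective g.
  move=> i j h; apply/val_inj; have := congr1 (fun o : 'I_n => Posz o) h; rewrite /= !gv => /eqP.
  by rewrite nth_uniq ?st // => /eqP.
have key : forall i : 'I_n, (Posz (perm ginj i) - Posz i)%R = nth 0%R x i.
  by move=> i; rewrite permE gv /t nth_tg ?sx // add0n addrC addKr.
exists (perm ginj).
  rewrite mem_enum inE; apply/forallP => i; rewrite key; by apply: (allP ax); rewrite mem_nth ?sx.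
symmetry; rewrite /fS (eq_map key).
rewrite -{2}(mkseq_nth 0%R x) /mkseq sx.
have -> : iota 0 n = map val (enum 'I_n) by rewrite val_enum_ord.
by rewrite -map_comp.
Qed.



Lemma PH m L : 0 < m -> Pperm [:: (-2)%R; ((Posz m) - 1)%R; (Posz m)] L = H m L 0 1.
Proof.
move=> m0; rewrite Pperm_count.
by rewrite -(@transfer m L m0 L [::] 0 1).
Qed.

Lemma sseq_sh m n d : sseq m.+1 m.+2 (Posz n - Posz d)%R = sh m n d.
Proof.
rewrite /sh; case: (leqP d n) => h.
  by rewrite subzn.
case E: (Posz n - Posz d)%R => [k|k] //; lia.
Qed.

Theorem mainTheorem10 (m n : nat) : (1 <= m)%N ->
  (sseq m.+1 m.+2 ((Posz n))) ^ 2 =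
    (n == 0%N) + (sseq m.+1 m.+2 ((Posz n) - (Posz (m.+1)))%R) ^ 2
      + (sseq m.+1 m.+2 ((Posz n) - (Posz (m.+2)))%R) ^ 2
      + 2 * \sum_(2 * m + 3 <= l < n.+1)
              Pperm [:: (-2)%R; ((Posz m) - 1)%R; (Posz m)] (l - (2 * m + 3))
              * (sseq m.+1 m.+2 (Posz (n - l))) ^ 2.
Proof.
move=> m0; rewrite !sseq_sh.
have sP : forall k, sseq m.+1 m.+2 (Posz k) = s m k by [].
rewrite sP; under eq_bigr => l _ do rewrite sP PH //.
case: n => [|N].
  rewrite big_geq; last lia.
  by rewrite /sh /=.
rewrite s_recS !shSS /=.
suff E : sh m N m * sh m N m.+1 = \sum_(2 * m + 3 <= l < N.+2) H m (l - (2 * m + 3)) 0 1 * s m (N.+1 - l) ^ 2.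
  by rewrite -E sqrnD add0n.
case: (ltnP N m) => hN.
  rewrite big_geq; last lia.
  by rewrite /sh leqNgt hN.
have [M ->] : exists M, N = m + M by exists (N - m); lia.
have e1 := sh_add m M m 0; rewrite addn0 in e1.
have e2 := sh_add m M m 1; rewrite addn1 in e2.
rewrite e1 e2 (F_id M m0 (u:=0) (v:=1)) //; try lia.
have -> : (1 == m.+1) = false by apply/negbTE; lia.
rewrite /= mul0n addn0.
rewrite -(big_mkord (fun _ => true) (fun j => H m j 0 1 * sh m M (j + m.+2) ^ 2)).
rewrite -[2 * m + 3]add0n big_addn !add0n.
rewrite (@big_cat_nat _ _ _ ((m + M).+2 - (2 * m + 3))) //=; last lia.
rewrite [X in _ + X = _]big_nat_cond [X in _ + X = _]big1 ?addn0; last first.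
  move=> j /andP[/andP[hj _] _]; rewrite /sh leqNgt ifF ?muln0 //; lia.
apply: eq_big_nat => j /andP[_ hj]; rewrite addnK /sh ifT; last lia.
congr (_ * (s m _ ^ 2)); lia.
Qed.
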